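(* Let $K$ be a field, $c\in K\setminus\{0\}$, $n\ge1$, and let $f$ be a $c$-frieze of order $n$ over $K$. For every even $k$ with $-1\le k\le n+2$, the sequence $(f(i,i+k-1))_{i\in\mathbb{Z}}$ (row $k$) is periodic with (least) period a divisor of $n+3$. If $n$ is even, then for every odd $k$ with $-1\le k\le n+2$, row $k$ is periodic with (least) period a divisor of $2n+6$.
   Context: The $c$-continuant polynomials $P_k=P_k^c$ ($k\ge-1$) are defined by $P_{-1}=0$, $P_0=1$, and for $k\ge1$, $P_k(x_1,\dots,x_k)=x_kP_{k-1}(x_1,\dots,x_{k-1})+cP_{k-2}(x_1,\dots,x_{k-2})$. A family $(x_i)_{i\in\mathbb{Z}}$ in $K$ is $n$-admissible if $P_{n+2}(x_i,\dots,x_{i+n+1})=0$ for all $i$. Let $\mathbb{B}_n=\{(i,j)\in\mathbb{Z}^2:-2\le j-i\le n+1\}$. A $c$-frieze of order $n$ is a function $f:\mathbb{B}_n\to K$ for which there is an $n$-admissible family $(x_i)$ with $f(i,j)=P_{j-i+1}(x_i,\dots,x_j)$ for all $(i,j)\in\mathbb{B}_n$. Row $k$ of $f$ is the sequence $(f(i,i+k-1))_{i\in\mathbb{Z}}$; it is periodic of period $p$ if $f(i+p,i+k-1+p)=f(i,i+k-1)$ for all $i$ and $p$ is the least positive integer with this property. *)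

(* Defs.v *)
From HB Require Import structures.
From mathcomp Require Import all_boot all_order all_algebra.
Set Implicit Arguments. Unset Strict Implicit. Unset Printing Implicit Defensive.
Import Order.TTheory GRing.Theory Num.Theory.
Local Open Scope ring_scope.

Section Frieze.
Variables (K : fieldType) (c : K).

(* Helper: for r = rev [:: x_1; ...; x_k], returns (P_k, P_{k-1}). *)
Fixpoint cont_pair (r : seq K) : K * K :=
  match r with
  | [::] => (1, 0)
  | x :: r' => let: (a, b) := cont_pair r' in (x * a + c * b, a)
  end.

(* The c-continuant P_k(x_1,...,x_k) for k >= 0, with s = [:: x_1; ...; x_k]:
   P_0 = 1, P_k = x_k P_{k-1} + c P_{k-2} (with P_{-1} = 0). *)
Definition continuant (s : seq K) : K := (cont_pair (rev s)).1.

Definition window (x : int -> K) (i : int) (m : nat) : seq K :=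
  [seq x (i + (k%:Z)) | k <- iota 0 m].

Definition admissible (n : nat) (x : int -> K) : Prop :=
  forall i : int, continuant (window x i n.+2) = 0.

(* P_{j-i+1}(x_i,...,x_j), with P_{-1} = 0 (case j - i = -2). *)
Definition frieze_value (x : int -> K) (i j : int) : K :=
  if j - i + 1 < 0 then 0 else continuant (window x i (absz (j - i + 1))).

Definition is_frieze (n : nat) (f : int -> int -> K) : Prop :=
  exists x : int -> K, admissible n x /\
    forall i j : int, -2 <= j - i <= n%:Z + 1 -> f i j = frieze_value x i j.

Definition row_has_period (f : int -> int -> K) (k : int) (p : nat) : Prop :=
  (0 < p)%N /\ forall i : int, f (i + p%:Z) (i + k - 1 + p%:Z) = f i (i + k - 1).

Definition row_least_period (f : int -> int -> K) (k : int) (p : nat) : Prop :=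
  row_has_period f k p /\ forall q : nat, (0 < q < p)%N -> ~ row_has_period f k q.

End Frieze.

(* Main.v *)
Require Import Defs.
From HB Require Import structures.
From mathcomp Require Import all_boot all_order all_algebra.
From mathcomp Require Import ring lra zify.
From Stdlib Require Import Classical.
Set Implicit Arguments. Unset Strict Implicit.
Import Order.TTheory GRing.Theory Num.Theory.
Local Open Scope ring_scope.

Fixpoint Qp (K : fieldType) (c : K) (x : int -> K) (i : int) (m : nat) : K * K :=
  match m with
  | 0%N => (1, 0)
  | m'.+1 => let: (a, b) := Qp c x i m' in (x (i + m'%:Z) * a + c * b, a)
  end.
Arguments Qp {K}.
Definition Q (K : fieldType) (c : K) x i m := (Qp c x i m).1.
Arguments Q {K}.

Lemma QpE (K : fieldType) (c : K) x i m : Qp c x i m.+1 = (Q c x i m.+1, Q c x i m).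
Proof. rewrite /Q /=. by case: (Qp c x i m). Qed.

Lemma Q0 (K : fieldType) (c : K) x i : Q c x i 0 = 1. Proof. by []. Qed.
Lemma Q1 (K : fieldType) (c : K) x i : Q c x i 1 = x i.
Proof. by rewrite /Q /= addr0 mulr1 mulr0 addr0. Qed.

Lemma QS2 (K : fieldType) (c : K) x i m :
  Q c x i m.+2 = x (i + m.+1%:Z) * Q c x i m.+1 + c * Q c x i m.
Proof.
have E: Qp c x i m.+2 = (let: (a,b) := Qp c x i m.+1 in (x (i + m.+1%:Z) * a + c * b, a)) by [].
by rewrite {1}/Q E QpE.
Qed.

Lemma windowQ (K : fieldType) (c : K) x i m :
  continuant c (window x i m) = Q c x i m.
Proof.
rewrite /continuant /Q; congr fst; elim: m => [//|m IH].
rewrite /window -addn1 iotaD map_cat cats1 rev_rcons /= -/(window x i m) IH.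
by rewrite add0n addn1.
Qed.

Lemma QL (K : fieldType) (c : K) x i m :
  Q c x i m.+2 = x i * Q c x (i + 1) m.+1 + c * Q c x (i + 2) m.
Proof.
suff H : forall k, Q c x i k.+2 = x i * Q c x (i + 1) k.+1 + c * Q c x (i + 2) k /\
   Q c x i k.+3 = x i * Q c x (i + 1) k.+2 + c * Q c x (i + 2) k.+1 by case: (H m).
clear m.
elim=> [|m [IH1 IH2]].
  rewrite !QS2 !Q1 !Q0.
  have -> : i + 1 + 1%:Z = i + 2 by lia.
  rewrite -[x (i + 1%:Z)]/(x (i+1)) -[x (i + 2%:Z)]/(x (i+2)).
  split; ring.
split=> //.
rewrite (QS2 _ _ i m.+2) IH1 IH2 (QS2 _ _ (i+1) m.+1) (QS2 _ _ (i+2) m).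
have -> : i + 1 + m.+2%:Z = i + m.+3%:Z by lia.
have -> : i + 2 + m.+1%:Z = i + m.+3%:Z by lia.
ring.
Qed.

Lemma Q_nz2 (K : fieldType) (c : K) x i m : c != 0 ->
  Q c x i m.+1 = 0 -> Q c x i m = 0 -> False.
Proof.
move=> cnz; elim: m => [|m IH]; first by rewrite Q0 => _ /eqP; rewrite oner_eq0.
rewrite QS2 => H1 H2; apply: IH => //.
move: H1; rewrite H2 mulr0 add0r => /eqP; rewrite mulf_eq0 (negbTE cnz) /= => /eqP.
done.
Qed.

Lemma Q_scale (K : fieldType) (c : K) x y i i' t u : t * u = 1 ->
  (forall k : nat, y (i + k%:Z) = x (i' + k%:Z) * (if odd k then u else t)) ->
  forall m, Q c y i m = Q c x i' m * (if odd m then t else 1).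
Proof.
move=> tu H m.
suff HH : forall k, Q c y i k = Q c x i' k * (if odd k then t else 1) /\
   Q c y i k.+1 = Q c x i' k.+1 * (if odd k.+1 then t else 1) by case: (HH m).
clear m; elim=> [|k [IH1 IH2]].
  by rewrite !Q0 !Q1 /= mulr1; move: (H 0%N); rewrite !addr0.
split=> //.
rewrite !QS2 IH1 IH2 H /=.
case: (odd k) => /=; [ring | rewrite -tu; ring].
Qed.


Lemma adm_b2 (K : fieldType) (c : K) x n (cnz : c != 0)
  (adm : forall i, Q c x i n.+2 = 0) i : Q c x (i + 2) n.+1 = Q c x i n.+1.
Proof.
have := QS2 c x i n.+1; rewrite adm mulr0 add0r QL adm mulr0 add0r.
by move/mulfI; apply.
Qed.

Lemma adm_shift (K : fieldType) (c : K) x n (cnz : c != 0)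
  (adm : forall i, Q c x i n.+2 = 0) j :
  x (j + n.+3%:Z) * Q c x j n.+1 = x j * Q c x (j + 1) n.+1.
Proof.
have h1 : Q c x j n.+3 = c * Q c x j n.+1 by rewrite QS2 adm mulr0 add0r.
have h2 : Q c x (j+1) n.+3 = c * Q c x (j+1) n.+1 by rewrite QS2 adm mulr0 add0r.
have := QS2 c x j n.+2; rewrite QL h2 h1 !adm !mulr0 !addr0.
move=> h; apply: (mulfI cnz); rewrite mulrCA -h; ring.
Qed.

Lemma adm_nz (K : fieldType) (c : K) x n (cnz : c != 0)
  (adm : forall i, Q c x i n.+2 = 0) i : Q c x i n.+1 != 0.
Proof. apply/eqP => h; exact: (Q_nz2 cnz (adm i) h). Qed.

Lemma adm_bper (K : fieldType) (c : K) x n (cnz : c != 0)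
  (adm : forall i, Q c x i n.+2 = 0) i (k : nat) :
  Q c x (i + k%:Z) n.+1 = if odd k then Q c x (i+1) n.+1 else Q c x i n.+1.
Proof.
suff H : forall k, (Q c x (i + k%:Z) n.+1 = (if odd k then Q c x (i+1) n.+1 else Q c x i n.+1)) /\
  (Q c x (i + k.+1%:Z) n.+1 = (if odd k.+1 then Q c x (i+1) n.+1 else Q c x i n.+1)) by case: (H k).
clear k; elim=> [|k [IH1 IH2]]; first by rewrite addr0.
split=> //.
have -> : i + k.+2%:Z = i + k%:Z + 2 by lia.
by rewrite (adm_b2 cnz adm) IH1 /= negbK.
Qed.

Lemma adm_shiftQ (K : fieldType) (c : K) x n (cnz : c != 0)
  (adm : forall i, Q c x i n.+2 = 0) i m :
  Q c x (i + n.+3%:Z) m =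
  Q c x i m * (if odd m then Q c x (i+1) n.+1 / Q c x i n.+1 else 1).
Proof.
have n0 := adm_nz cnz adm i; have n1 := adm_nz cnz adm (i+1).
have tu : Q c x (i+1) n.+1 / Q c x i n.+1 * (Q c x i n.+1 / Q c x (i+1) n.+1) = 1.
  by rewrite mulrA divfK // divff.
move: m; apply: (Q_scale c tu) => k.
have e1 := adm_shift cnz adm (i + k%:Z).
rewrite (_ : i + n.+3%:Z + k%:Z = i + k%:Z + n.+3%:Z); last by rewrite addrAC.
apply: (mulIf (adm_nz cnz adm (i + k%:Z))); rewrite e1.
rewrite (_ : i + k%:Z + 1 = i + k.+1%:Z); last by rewrite -addrA -[in RHS]addn1 PoszD.
rewrite (adm_bper cnz adm i k) (adm_bper cnz adm i k.+1) /=.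
by case: (odd k) => /=; field; first [exact: n0 | exact: n1].
Qed.


Lemma min_ex (P : nat -> Prop) N : P N -> exists p, P p /\ forall q, (q < p)%N -> ~ P q.
Proof.
elim/ltn_ind: N => N IH PN.
case: (classic (exists q, (q < N)%N /\ P q)) => [[q [qN Pq]]|H].
  exact: IH q qN Pq.
by exists N; split=> // q qN Pq; apply: H; exists q.
Qed.

Lemma rhp_mul (K : fieldType) (f : int -> int -> K) k p :
  row_has_period f k p -> forall (m : nat) i,
  f (i + (m * p)%N%:Z) (i + k - 1 + (m * p)%N%:Z) = f i (i + k - 1).
Proof.
move=> [p0 Hp]; elim=> [|m IH] i; first by rewrite mul0n !addr0.
have -> : i + (m.+1 * p)%N%:Z = (i + (m * p)%N%:Z) + p%:Z by lia.
have -> : i + k - 1 + (m.+1 * p)%N%:Z = (i + (m * p)%N%:Z) + k - 1 + p%:Z by lia.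
rewrite Hp.
have -> : i + (m * p)%N%:Z + k - 1 = i + k - 1 + (m * p)%N%:Z by lia.
exact: IH.
Qed.

Lemma least_period (K : fieldType) (f : int -> int -> K) k P :
  row_has_period f k P -> exists p, row_least_period f k p /\ (p %| P)%N.
Proof.
move=> HP; have [p [Hp Hmin]] := min_ex HP.
exists p; split; first by split=> // q /andP [q0 qp]; apply: Hmin.
have p0 : (0 < p)%N by case: Hp.
rewrite /dvdn; apply/eqP; have [//|rn0] := posnP (P %% p)%N; exfalso.
apply: (Hmin (P %% p)%N (ltn_pmod _ p0)).
split=> // i.
have -> : i + k - 1 + (P %% p)%N%:Z = i + (P %% p)%N%:Z + k - 1 by lia.
rewrite -(rhp_mul Hp (P %/ p)%N (i + (P %% p)%N%:Z)).
have E := divn_eq P p.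
have -> : i + (P %% p)%N%:Z + (P %/ p * p)%N%:Z = i + P%:Z by rewrite {3}E; lia.
have -> : i + (P %% p)%N%:Z + k - 1 + (P %/ p * p)%N%:Z = i + k - 1 + P%:Z by rewrite {3}E; lia.
by case: HP.
Qed.

Unset Implicit Arguments.
Theorem mainTheorem11 (K : fieldType) (c : K) (n : nat) (f : int -> int -> K) :
  c != 0 -> (1 <= n)%N -> is_frieze c n f ->
  (forall k : int, -1 <= k <= n%:Z + 2 -> (2 %| k)%Z ->
     exists p : nat, row_least_period f k p /\ (p %| n + 3)%N) /\
  (~~ odd n -> forall k : int, -1 <= k <= n%:Z + 2 -> ~~ (2 %| k)%Z ->
     exists p : nat, row_least_period f k p /\ (p %| 2 * n + 6)%N).
Proof.
move=> cnz n1 [x [adm fx]].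
have admQ : forall i, Q c x i n.+2 = 0 by move=> i; rewrite -windowQ; exact: adm.
have rowval : forall k i, -1 <= k <= n%:Z + 2 ->
    f i (i + k - 1) = if k < 0 then 0 else Q c x i `|k|%N.
  move=> k i /andP [k1 k2]; rewrite fx; last by apply/andP; split; lia.
  rewrite /frieze_value (_ : i + k - 1 - i + 1 = k); last by lia.
  by case: ifP => // _; rewrite windowQ.
have rowper : forall k (P : nat), -1 <= k <= n%:Z + 2 -> (0 < P)%N ->
    (forall i, Q c x (i + P%:Z) `|k|%N = Q c x i `|k|%N) -> row_has_period f k P.
  move=> k P hk P0 HQ; split=> // i.
  rewrite (_ : i + k - 1 + P%:Z = (i + P%:Z) + k - 1); last by lia.
  by rewrite !rowval //; case: ifP.
split.
  move=> k hk hev.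
  have ev : ~~ odd `|k|%N by rewrite -dvdn2.
  apply: least_period; apply: (rowper _ _ hk) => [|i]; first by lia.
  rewrite (_ : (n + 3)%N%:Z = n.+3%:Z); last by lia.
  by rewrite (adm_shiftQ cnz admQ) (negbTE ev) mulr1.
move=> nev k hk hodd.
have od : odd `|k|%N by move: hodd; rewrite dvdzE dvdn2 negbK.
apply: least_period; apply: (rowper _ _ hk) => [|i]; first by lia.
rewrite (_ : (2 * n + 6)%N%:Z = n.+3%:Z + n.+3%:Z); last by lia.
rewrite addrA !(adm_shiftQ cnz admQ) od.
rewrite (_ : i + n.+3%:Z + 1 = i + n.+4%:Z); last by lia.
rewrite (adm_bper cnz admQ i n.+4) /= (negbTE nev) /=.
have n0 := adm_nz cnz admQ i; have n1' := adm_nz cnz admQ (i+1).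
by field; apply/andP; split.
Qed.
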